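(* Let $f_1,\dots,f_m\in\mathbb{C}[x_1,\dots,x_n]$ with $r$ solutions, and suppose a sparse-resultant solver is given by a square matrix $$\mathbf{M}(u_0)=\begin{bmatrix}\hat{\mathbf{A}}_{11}&\hat{\mathbf{A}}_{12}\\ \mathbf{A}_{21}-u_0\mathbf{I}&\mathbf{A}_{22}\end{bmatrix}$$ as described in the context, with $\hat{\mathbf{A}}_{12}$ square invertible, $|B_1|=r$, and Schur complement $\mathbf{X}=\mathbf{A}_{21}-\mathbf{A}_{22}\hat{\mathbf{A}}_{12}^{-1}\hat{\mathbf{A}}_{11}$. Define an action-matrix solver for the action polynomial $f=x_1$ by taking the basis monomials $B_a=B_1$, the reducible monomials $B_r=\{x_1\mathbf{x}^{\beta}\mid \mathbf{x}^{\beta}\in B_1\}\setminus B_1$, the excess monomials $B_e=B_2\setminus B_r$, the same monomial multiples for $f_1,\dots,f_m$ as in the resultant construction, the same monomial ordering, and the elimination template $\hat{\mathbf{C}}=\begin{bmatrix}\hat{\mathbf{A}}_{12}&\hat{\mathbf{A}}_{11}\end{bmatrix}$ (columns indexed by $\mathbf{b}_2$ then $\mathbf{b}_1$). Let $\mathbf{M}_f$ be the resulting action matrix. Then the two solvers are equivalent: the Gauss–Jordan form of $\hat{\mathbf{C}}$ is $\begin{bmatrix}\mathbf{I}&\hat{\mathbf{A}}_{12}^{-1}\hat{\mathbf{A}}_{11}\end{bmatrix}$, so the Gauss–Jordan elimination can be replaced by the product $\hat{\mathbf{A}}_{12}^{-1}\hat{\mathbf{A}}_{11}$, and $\mathbf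{M}_f=\mathbf{X}$.
   Context: Setting of the sparse-resultant solver: $B=B_1\sqcup B_2$ is a finite set of monomials in $x_1,\dots,x_n$ with $B_1=\{\mathbf{x}^{\beta}\in B\mid x_1\mathbf{x}^{\beta}\in B\}$, ordered as vectors $\mathbf{b}_1=(\mathbf{x}^{\beta_1},\dots,\mathbf{x}^{\beta_r})$ and $\mathbf{b}_2$; the columns of $\mathbf{M}(u_0)$ are indexed by $\mathbf{b}_1$ followed by $\mathbf{b}_2$. The upper block $\begin{bmatrix}\hat{\mathbf{A}}_{11}&\hat{\mathbf{A}}_{12}\end{bmatrix}$ consists of coefficient vectors of polynomials $t f_i$ ($i\le m$, $t$ in chosen sets $T_i$ of monomials), and the $j$-th row of the lower block $\begin{bmatrix}\mathbf{A}_{21}-u_0\mathbf{I}&\mathbf{A}_{22}\end{bmatrix}$ is the coefficient vector of $\mathbf{x}^{\beta_j}(x_1-u_0)$ (extra polynomial $x_1-u_0$). It is assumed that the cosets of the monomials of $B_1$ form a linear basis of the $r$-dimensional quotient ring $\mathbb{C}[x_1,\dots,x_n]/\langle f_1,\dots,f_m\rangle$. Action matrix read-off: writing the Gauss–Jordan form of $\hat{\mathbf{C}}$ as $\begin{bmatrix}\mathbf{I}&\mathbf{G}\end{bmatrix}$ with rows of $\mathbf{G}$ indexed by the monomials of $\mathbf{b}_2$, let $\mathbf{C}'_{23}$ be the rows of $\mathbf{G}$ indexed by $B_r$; the $r\times r$ matrix $\mathbf{M}_f$ has $j$-th row equal to the $i$-th unit row vector if $x_1\mathbf{x}^{\beta_j}=\mathbf{x}^{\beta_i}\in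 B_1$, and otherwise equal to minus the row of $\mathbf{C}'_{23}$ indexed by $x_1\mathbf{x}^{\beta_j}\in B_r$. *)

(* Defs.v *)
From HB Require Import structures.
From mathcomp Require Import all_boot all_order all_algebra.
From mathcomp Require Import reals.
From mathcomp Require Import complex.
From mathcomp Require Import mpoly.

Set Implicit Arguments.
Unset Strict Implicit.
Unset Printing Implicit Defensive.

Import Order.TTheory GRing.Theory Num.Theory.
Local Open Scope ring_scope.

Definition is_pivot (F : fieldType) (p q : nat) (R : 'M[F]_(p, q))
    (i : 'I_p) (j : 'I_q) : Prop :=
  R i j != 0 /\ forall k : 'I_q, (k < j)%N -> R i k = 0.

Definition is_rref (F : fieldType) (p q : nat) (R : 'M[F]_(p, q)) : Prop :=
  (forall i1 i2 : 'I_p, (i1 < i2)%N -> row i1 R = 0 -> row i2 R = 0) /\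
  (forall (i1 i2 : 'I_p) (j1 j2 : 'I_q), (i1 < i2)%N ->
     is_pivot R i1 j1 -> is_pivot R i2 j2 -> (j1 < j2)%N) /\
  (forall (i : 'I_p) (j : 'I_q), is_pivot R i j ->
     R i j = 1 /\ forall i' : 'I_p, i' != i -> R i' j = 0).

(* R is the Gauss-Jordan form of A: R is in reduced row echelon form and is
   obtained from A by elementary row operations, i.e. R = P A, P invertible *)
Definition gauss_jordan_form (F : fieldType) (p q : nat)
    (A R : 'M[F]_(p, q)) : Prop :=
  is_rref R /\ exists P : 'M[F]_p, P \in unitmx /\ R = P *m A.

Definition in_ideal (F : fieldType) (n m : nat) (f : 'I_m -> {mpoly F[n]})
    (p : {mpoly F[n]}) : Prop :=
  exists g : 'I_m -> {mpoly F[n]}, p = \sum_(i < m) g i * f i.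

Definition cosets_basis (F : fieldType) (n m r : nat)
    (f : 'I_m -> {mpoly F[n]}) (b : 'I_r -> 'X_{1..n}) : Prop :=
  (forall p : {mpoly F[n]}, exists c : 'I_r -> F,
      in_ideal f (p - \sum_(j < r) c j *: 'X_[b j])) /\
  (forall c : 'I_r -> F,
      in_ideal f (\sum_(j < r) c j *: 'X_[b j]) -> forall j, c j = 0).

(* x_1 is the variable of index ord0 *)
Definition x1mon (n : nat) : 'X_{1..n.+1} := U_(ord0)%MM.

(* Action matrix read-off (action polynomial x_1) from the matrix G whose rows
   are indexed by b_2, as in the context: row j is the i-th unit row if
   x_1 b1_j = b1_i in B_1; otherwise it is minus the row of G (equivalently of
   C'_23, the rows of G indexed by B_r) indexed by x_1 b1_j in B_r. *)
Definition action_matrix (F : fieldType) (n r s : nat)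
    (b1 : 'I_r -> 'X_{1..n.+1}) (b2 : 'I_s -> 'X_{1..n.+1})
    (G : 'M[F]_(s, r)) : 'M[F]_r :=
  \matrix_(j < r)
    match [pick i : 'I_r | b1 i == (x1mon n + b1 j)%MM] with
    | Some i => delta_mx (0 : 'I_1) i
    | None =>
      match [pick k : 'I_s | b2 k == (x1mon n + b1 j)%MM] with
      | Some k => - row k G
      | None => 0
      end
    end.

Definition inB (n r s : nat) (b1 : 'I_r -> 'X_{1..n}) (b2 : 'I_s -> 'X_{1..n})
    (mo : 'X_{1..n}) : bool :=
  [exists i, b1 i == mo] || [exists k, b2 k == mo].

(* Main.v *)
Require Import Defs.
From HB Require Import structures.
From mathcomp Require Import all_boot all_order all_algebra.
From mathcomp Require Import reals complex mpoly.
From mathcomp Require Import zify.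

Import Order.TTheory GRing.Theory Num.Theory.
Local Open Scope ring_scope.

Lemma coefX1 (F : fieldType) n (b m : 'X_{1..n.+1}) (u : F) :
  ('X_[b] * ('X_ord0 - u%:MP))@_m = ((x1mon n + b)%MM == m)%:R - u * (b == m)%:R.
Proof.
by rewrite mulrBr -mpolyXD mulrC mul_mpolyC mcoeffB mcoeffZ !mcoeffX addmC.
Qed.

Lemma incr_id s (p : 'I_s -> 'I_s) :
  (forall i1 i2 : 'I_s, (i1 < i2)%N -> (p i1 < p i2)%N) -> forall i, p i = i.
Proof.
move=> H.
have lo : forall k (i : 'I_s), (i : nat) = k -> (k <= p i)%N.
  elim=> [//|k IH] i Hi.
  have hk : (k < s)%N by rewrite -Hi ltnW // ltn_ord.
  have := IH (Ordinal hk) erefl.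
  have := H (Ordinal hk) i; rewrite Hi /= => /(_ (ltnSn k)). lia.
have hi : forall d (i : 'I_s), ((i:nat) + d = (s - 1))%N -> (p i + d <= (s - 1))%N.
  elim=> [|d IH] i Hi.
    have := ltn_ord (p i); lia.
  have hk : (i.+1 < s)%N.
    have := ltn_ord i. move: Hi. lia.
  have e : (nat_of_ord (Ordinal hk) + d = (s - 1))%N by rewrite /= -Hi addSnnS.
  have := IH (Ordinal hk) e.
  have := H i (Ordinal hk) (ltnSn _). lia.
move=> i; apply: val_inj => /=.
have := lo _ i erefl; have := hi ((s - 1) - i)%N i ltac:(have := ltn_ord i; lia).
have := ltn_ord i; lia.
Qed.

Section GJ.
Variables (F : fieldType) (s r : nat).

Lemma piv_id (Y : 'M[F]_(s, r)) i j :
  is_pivot (row_mx 1%:M Y) i j <-> j = lshift r i.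
Proof.
split.
  move=> [nz z]; case: (splitP j) => [k ek|k ek].
    apply: val_inj; rewrite /= ek.
    case: (ltngtP k i) => // h.
      move: nz; have -> : j = lshift r k by apply: val_inj.
      rewrite row_mxEl mxE (_ : (i == k) = false) ?eqxx //.
      by apply/eqP => e; move: h; rewrite e ltnn.
    have := z (lshift r i); rewrite /= ek => /(_ h).
    by rewrite row_mxEl mxE eqxx => /eqP; rewrite oner_eq0.
  have := z (lshift r i); rewrite /= ek => /(_ (leq_trans (ltn_ord i) (leq_addr _ _))).
  by rewrite row_mxEl mxE eqxx => /eqP; rewrite oner_eq0.
move=> ->; split; first by rewrite row_mxEl mxE eqxx oner_neq0.
move=> k hk.
have hk' : (k < s)%N by apply: ltn_trans hk (ltn_ord i).
have -> : k = lshift r (Ordinal hk') by apply: val_inj.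
rewrite row_mxEl mxE (_ : (i == _) = false) //.
  by apply/eqP => e; move: hk; rewrite e /= ltnn.
Qed.

Lemma rref_id (Y : 'M[F]_(s, r)) : is_rref (row_mx 1%:M Y).
Proof.
split; [|split].
- move=> i1 i2 _ /(congr1 (fun M : 'rV[F]_(s + r) => M 0 (lshift r i1))).
  rewrite mxE [in X in X = _]row_mxEl mxE eqxx mxE => /eqP. by rewrite oner_eq0.
- by move=> i1 i2 j1 j2 h /piv_id -> /piv_id ->.
- move=> i j /piv_id ->; rewrite row_mxEl mxE eqxx; split=> // i' h.
  by rewrite row_mxEl mxE (negbTE h).
Qed.

Lemma gj_main (A : 'M[F]_s) (B : 'M[F]_(s, r)) : A \in unitmx ->
  gauss_jordan_form (row_mx A B) (row_mx 1%:M (invmx A *m B)) /\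
  forall GJ, gauss_jordan_form (row_mx A B) GJ -> GJ = row_mx 1%:M (invmx A *m B).
Proof.
move=> uA; split.
  split; first exact: rref_id.
  exists (invmx A); split; first by rewrite unitmx_inv.
  by rewrite mul_mx_row mulVmx.
move=> GJ [[h1 [h2 h3]] [P [uP eGJ]]]; subst GJ.
rewrite mul_mx_row in h1 h2 h3 *.
set Q := P *m A in h1 h2 h3 *.
have uQ : Q \in unitmx by rewrite unitmx_mul uP.
have eQ : Q = P *m A by [].
clearbody Q.
suff Q1 : Q = 1%:M.
  have -> : P = invmx A.
    by rewrite -[P]mulmx1 -(mulmxV uA) mulmxA -eQ Q1 mul1mx.
  by rewrite Q1.
have ex : forall i, exists j : 'I_s, is_pivot (row_mx Q (P *m B)) i (lshift r j).
  move=> i.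
  have [j0 Hj0] : exists j0, Q i j0 != 0.
    case: (boolP [exists j, Q i j != 0]) => [/existsP//|/existsPn Hz].
    exfalso.
    have : row i (Q *m invmx Q) = 0.
      rewrite row_mul (_ : row i Q = 0) ?mul0mx //.
      by apply/rowP => k; rewrite !mxE; move/negPn/eqP: (Hz k).
    rewrite (mulmxV uQ) => /(congr1 (fun M : 'rV[F]_s => M 0 i)).
    by rewrite !mxE eqxx => /eqP; rewrite oner_eq0.
  case: (@arg_minnP _ j0 (fun j => Q i j != 0) (fun j => nat_of_ord j) Hj0) => j Hj Hmin.
  exists j; split; first by rewrite row_mxEl.
  move=> k hk.
  have hk' : (k < s)%N by apply: ltn_trans hk (ltn_ord j).
  have -> : k = lshift r (Ordinal hk') by apply: val_inj.
  rewrite row_mxEl; apply/eqP; apply/negPn/negP => nz.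
  by have := Hmin _ nz; rewrite /= leqNgt hk.
have [p Hp] := fin_all_exists ex.
have pid : forall i, p i = i.
  apply: incr_id => i1 i2 h.
  by have := h2 i1 i2 _ _ h (Hp i1) (Hp i2).
apply/matrixP => i k; rewrite mxE.
have := h3 _ _ (Hp k); rewrite pid row_mxEl => -[e1 e2].
case: (eqVneq i k) => [->|ne]; first by rewrite e1.
by have := e2 i ne; rewrite row_mxEl.
Qed.
End GJ.

Theorem proposition3 (R : realType) (n m r s : nat)
    (f : 'I_m -> {mpoly (complex R)[n.+1]})
    (b1 : 'I_r -> 'X_{1..n.+1}) (b2 : 'I_s -> 'X_{1..n.+1})
    (src : 'I_s -> 'I_m * 'X_{1..n.+1})
    (u0 : complex R)
    (A11h : 'M[complex R]_(s, r)) (A12h : 'M[complex R]_s)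
    (A21 : 'M[complex R]_r) (A22 : 'M[complex R]_(r, s)) :
  (* B = B_1 ⊔ B_2, listed without repetition by b1 and b2 *)
  injective b1 -> injective b2 -> (forall j k, b1 j != b2 k) ->
  (* B_1 = {x^beta in B | x_1 x^beta in B} *)
  (forall j, inB b1 b2 (x1mon n + b1 j)%MM) ->
  (forall k, ~~ inB b1 b2 (x1mon n + b2 k)%MM) ->
  (* the cosets of B_1 form a basis of C[x]/<f_1,...,f_m> (of dimension r) *)
  cosets_basis f b1 ->
  (* row k of the upper block is the coefficient vector of t f_i,
     where (i, t) = src k; these polynomials are supported in B *)
  (forall k, {subset msupp ('X_[(src k).2] * f (src k).1) <= inB b1 b2}) ->
  (forall k j, A11h k j = ('X_[(src k).2] * f (src k).1)@_(b1 j)) ->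
  (forall k l, A12h k l = ('X_[(src k).2] * f (src k).1)@_(b2 l)) ->
  (* row j of the lower block [A21 - u0 I, A22] is the coefficient vector of
     x^beta_j (x_1 - u0) *)
  (forall j i, (A21 - u0%:M) j i = ('X_[b1 j] * ('X_ord0 - u0%:MP))@_(b1 i)) ->
  (forall j k, A22 j k = ('X_[b1 j] * ('X_ord0 - u0%:MP))@_(b2 k)) ->
  (* \hat A_12 is invertible *)
  A12h \in unitmx ->
  let X := A21 - A22 *m invmx A12h *m A11h in
  let C := row_mx A12h A11h in
  gauss_jordan_form C (row_mx 1%:M (invmx A12h *m A11h)) /\
  (forall GJ : 'M[complex R]_(s, s + r), gauss_jordan_form C GJ ->
     GJ = row_mx 1%:M (invmx A12h *m A11h) /\
     action_matrix b1 b2 (rsubmx GJ) = X).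
Proof.
move=> inj1 inj2 d12 inB1 _ _ _ _ _ hA21 hA22 uA X C.
have [G1 G2] := @gj_main _ _ _ A12h A11h uA.
split=> // GJ hGJ; have eGJ := G2 GJ hGJ; split=> //.
rewrite eGJ row_mxKr /X.
set Y := invmx A12h *m A11h.
have eA21 : forall j i, A21 j i = ((x1mon n + b1 j)%MM == b1 i)%:R.
  move=> j i; have := hA21 j i; rewrite coefX1 !mxE => e.
  have : A21 j i = ((x1mon n + b1 j)%MM == b1 i)%:R - u0 * (b1 j == b1 i)%:R + u0 * (j == i)%:R.
    by rewrite -e mulr_natr subrK.
  by rewrite (inj_eq inj1) subrK.
have eA22 : forall j k, A22 j k = ((x1mon n + b1 j)%MM == b2 k)%:R.
  move=> j k; rewrite hA22 coefX1 (negbTE (d12 j k)) mulr0 subr0 //.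
rewrite -mulmxA -/Y; clearbody Y.
apply/matrixP => j i; rewrite !mxE.
case: pickP => [i' /eqP hi'|no1].
  rewrite !mxE eA21 -hi' (inj_eq inj1) eq_sym.
  rewrite big1 ?subr0 //= => k _.
  by rewrite eA22 -hi' (negbTE (d12 _ _)) mul0r.
case: pickP => [k /eqP hk|no2].
  rewrite !mxE eA21 -hk eq_sym (negbTE (d12 _ _)) sub0r; congr (- _).
  rewrite (bigD1 k) //= eA22 -hk eqxx mul1r big1 ?addr0 // => k' nk.
  by rewrite eA22 -hk (inj_eq inj2) eq_sym (negbTE nk) mul0r.
exfalso; have := inB1 j; rewrite /inB.
case/orP => /existsP [x /eqP hx]; [by have := no1 x; rewrite hx eqxx | by have := no2 x; rewrite hx eqxx].
Qed.
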